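(* The divergence problem for random walks with dynamic weights is undecidable: there is no algorithm that, given computable weight functions $W(n,n+1)$, $W(n,n-1)$ (for $n\geq1$) defining a random walk $\mathcal M$ on $\mathbb{N}$, an initial state $s_0\in\mathbb{N}$ and a finite target set $A\subseteq\mathbb{N}$, decides whether $\mathcal M$ is divergent with respect to $s_0$ and $A$.
   Context: A random walk with dynamic weights is given by computable functions $n\mapsto W(n,n+1)\in\mathbb{Q}_{>0}$ and $n\mapsto W(n,n-1)\in\mathbb{Q}_{>0}$ for $n\geq 1$; its Markov chain has state set $\mathbb{N}$, $p(0,1)=1$, and for $n>0$, $p(n,n+1)=\frac{W(n,n+1)}{W(n,n+1)+W(n,n-1)}$ and $p(n,n-1)=\frac{W(n,n-1)}{W(n,n+1)+W(n,n-1)}$. For a Markov chain $\mathcal M=(S,p)$, $Post^*_{\mathcal M}(X)$ is the set of states reachable from $X$ and $\mathbf{Pr}_{\mathcal M,s}(\mathbf{F}X)$ is the probability that the random path from $s$ ever (including time 0) is in $X$. $\mathcal M$ is divergent w.r.t. $s_0$ and $A$ if there exist computable $f_0,f_1:S\to\mathbb{R}_{\geq0}$ with: (a) for all $0<\theta<1$, $\mathbf{Pr}_{\mathcal M,s_0}(\mathbf{F}f_0^{-1}([0,\theta]))\leq\theta$; (b) for all $s$, $\mathbf{Pr}_{\mathcal M,s}(\mathbf{F}A)\leq f_1(s)$; (c) for all $0<\theta<1$, $\{s\mid f_0(s)\geq\theta\wedge f_1(s)\geq\theta\}\cap Post^*_{\mathcal M}(\{s_0\})$ is finite. *)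

(* Defs.v *)
From Stdlib Require Import Reals Lra Lia Arith List Relations ClassicalEpsilon.
From Coquelicot Require Import Coquelicot.
Open Scope R_scope.

(* Unary functions on nat; tuples are coded with the Cantor pairing function. *)

Definition pairN (x y : nat) : nat := ((x + y) * (x + y + 1) / 2 + y)%nat.

Inductive prog : Type :=
| PZero : prog
| PSucc : prog
| PId   : prog
| PFst  : prog
| PSnd  : prog
| PComp : prog -> prog -> prog
| PPair : prog -> prog -> prog
| PRec  : prog -> prog -> prog
| PMu   : prog -> prog.

Inductive eval : prog -> nat -> nat -> Prop :=
| ev_zero : forall x, eval PZero x 0
| ev_succ : forall x, eval PSucc x (S x)
| ev_id   : forall x, eval PId x x
| ev_fst  : forall x y, eval PFst (pairN x y) x
| ev_snd  : forall x y, eval PSnd (pairN x y) y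
| ev_comp : forall f g x y z, eval g x y -> eval f y z -> eval (PComp f g) x z
| ev_pair : forall f g x a b, eval f x a -> eval g x b -> eval (PPair f g) x (pairN a b)
| ev_rec0 : forall f g x y, eval f x y -> eval (PRec f g) (pairN x 0) y
| ev_recS : forall f g x n y z,
    eval (PRec f g) (pairN x n) y -> eval g (pairN x (pairN n y)) z ->
    eval (PRec f g) (pairN x (S n)) z
| ev_mu   : forall f x n,
    eval f (pairN x n) 0 ->
    (forall m, (m < n)%nat -> exists k, eval f (pairN x m) (S k)) ->
    eval (PMu f) x n.

Fixpoint code (p : prog) : nat :=
  match p with
  | PZero => pairN 0 0
  | PSucc => pairN 1 0
  | PId => pairN 2 0
  | PFst => pairN 3 0
  | PSnd => pairN 4 0
  | PComp f g => pairN 5 (pairN (code f) (code g))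
  | PPair f g => pairN 6 (pairN (code f) (code g))
  | PRec f g => pairN 7 (pairN (code f) (code g))
  | PMu f => pairN 8 (code f)
  end.

Fixpoint code_list (l : list nat) : nat :=
  match l with
  | nil => 0%nat
  | x :: l => S (pairN x (code_list l))
  end.

(* A nonnegative rational is coded by pairN a b, denoting a / (b+1). *)
Definition rat_of (a b : nat) : R := INR a / INR (S b).

Definition computes_pos_rat (P : prog) (w : nat -> R) : Prop :=
  forall n : nat, (1 <= n)%nat ->
    exists a b : nat, eval P n (pairN a b) /\ (0 < a)%nat /\ w n = rat_of a b.

Definition computable_real_fun (f : nat -> R) : Prop :=
  exists P : prog, forall s k : nat,
    exists a b : nat, eval P (pairN s k) (pairN a b) /\
      Rabs (f s - rat_of a b) <= / INR (S k).

Section Walk.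
Variables (wu wd : nat -> R).  (* wu n = W(n,n+1), wd n = W(n,n-1) *)

Definition p_up (n : nat) : R :=
  match n with O => 1 | S _ => wu n / (wu n + wd n) end.
Definition p_down (n : nat) : R :=
  match n with O => 0 | S _ => wd n / (wu n + wd n) end.

Definition trans (s t : nat) : R :=
  (if Nat.eq_dec t (S s) then p_up s else 0) +
  (match s with O => 0 | S s' => if Nat.eq_dec t s' then p_down s else 0 end).

Definition reachable (s0 : nat) (t : nat) : Prop :=
  clos_refl_trans nat (fun s t => 0 < trans s t) s0 t.

Definition ind (X : nat -> Prop) (s : nat) : bool :=
  if excluded_middle_informative (X s) then true else false.

Fixpoint reach_n (X : nat -> Prop) (n : nat) (s : nat) : R :=
  if ind X s then 1 else
  match n with
  | O => 0
  | S n' => p_up s * reach_n X n' (S s) + p_down s * reach_n X n' (pred s)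
  end.

(* Pr_s(F X) = limit of the (nondecreasing, bounded) bounded-horizon probabilities *)
Definition PrF (s : nat) (X : nat -> Prop) : R :=
  real (Lim_seq (fun n => reach_n X n s)).

Definition divergent (s0 : nat) (A : list nat) : Prop :=
  exists f0 f1 : nat -> R,
    computable_real_fun f0 /\ computable_real_fun f1 /\
    (forall s, 0 <= f0 s /\ 0 <= f1 s) /\
    (forall theta, 0 < theta < 1 ->
       PrF s0 (fun s => f0 s <= theta) <= theta) /\
    (forall s, PrF s (fun t => In t A) <= f1 s) /\
    (forall theta, 0 < theta < 1 ->
       exists N : nat, forall s,
         theta <= f0 s -> theta <= f1 s -> reachable s0 s -> (s < N)%nat).
End Walk.

Definition input_code (Wu Wd : prog) (s0 : nat) (A : list nat) : nat :=
  pairN (code Wu) (pairN (code Wd) (pairN s0 (code_list A))).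

(* Main.v *)
Require Import Defs.
From Stdlib Require Import Reals Lra Lia Arith List Relations ClassicalEpsilon.
From Coquelicot Require Import Coquelicot.
Open Scope R_scope.

Lemma tri_even : forall s, exists k, (s * (s + 1) = 2 * k)%nat.
Proof.
  induction s as [|s [k Hk]]. exists 0%nat; lia.
  exists (k + s + 1)%nat. nia.
Qed.

Lemma two_pairN : forall x y, (2 * pairN x y = (x + y) * (x + y + 1) + 2 * y)%nat.
Proof.
  intros x y. unfold pairN. destruct (tri_even (x + y)) as [k Hk].
  rewrite Hk. rewrite (Nat.mul_comm 2 k), Nat.div_mul by lia. lia.
Qed.

Arguments pairN : simpl never.

Lemma pairN_inj : forall a b c d, pairN a b = pairN c d -> a = c /\ b = d.
Proof.
  intros a b c d H.
  assert (E : ((a + b) * (a + b + 1) + 2 * b = (c + d) * (c + d + 1) + 2 * d)%nat).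
  { rewrite <- !two_pairN. rewrite H. reflexivity. }
  destruct (lt_eq_lt_dec (a + b) (c + d)) as [[Hl|He]|Hl].
  - assert ((a + b + 1) * (a + b + 1 + 1) <= (c + d) * (c + d + 1))%nat
      by (apply Nat.mul_le_mono; lia). nia.
  - rewrite He in E. lia.
  - assert ((c + d + 1) * (c + d + 1 + 1) <= (a + b) * (a + b + 1))%nat
      by (apply Nat.mul_le_mono; lia). nia.
Qed.

Fixpoint unpair (n : nat) : nat * nat :=
  match n with
  | O => (0%nat, 0%nat)
  | S n' => match unpair n' with
            | (O, y) => (S y, 0%nat)
            | (S x, y) => (x, S y)
            end
  end.

Lemma pair_unpair : forall n, pairN (fst (unpair n)) (snd (unpair n)) = n.
Proof.
  induction n as [|n IH]. reflexivity.
  simpl. destruct (unpair n) as [x y] eqn:E. simpl in IH.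
  destruct x as [|x]; simpl.
  - apply (Nat.mul_cancel_l _ _ 2); [lia|].
    pose proof (two_pairN (S y) 0). pose proof (two_pairN 0 y). nia.
  - apply (Nat.mul_cancel_l _ _ 2); [lia|].
    pose proof (two_pairN x (S y)). pose proof (two_pairN (S x) y). nia.
Qed.

Lemma unpair_pair : forall a b, unpair (pairN a b) = (a, b).
Proof.
  intros a b. destruct (unpair (pairN a b)) as [x y] eqn:E.
  pose proof (pair_unpair (pairN a b)) as H. rewrite E in H. simpl in H.
  apply pairN_inj in H. destruct H; subst; reflexivity.
Qed.

Fixpoint Kc (n : nat) : prog :=
  match n with O => PZero | S m => PComp PSucc (Kc m) end.

Lemma eval_Kc : forall n x, eval (Kc n) x n.
Proof. induction n; intros x; simpl. constructor. econstructor; [apply IHn|constructor]. Qed.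

Lemma eval_fst_gen : forall x, eval PFst x (fst (unpair x)).
Proof. intros x. pose proof (ev_fst (fst (unpair x)) (snd (unpair x))) as H.
  rewrite pair_unpair in H. exact H. Qed.
Lemma eval_snd_gen : forall x, eval PSnd x (snd (unpair x)).
Proof. intros x. pose proof (ev_snd (fst (unpair x)) (snd (unpair x))) as H.
  rewrite pair_unpair in H. exact H. Qed.

Ltac ev :=
  lazymatch goal with
  | |- eval (PComp _ _) _ _ => eapply ev_comp; [ev | ev]
  | |- eval (PPair _ _) _ _ => eapply ev_pair; [ev | ev]
  | |- eval PFst _ _ => first [apply ev_fst | apply eval_fst_gen]
  | |- eval PSnd _ _ => first [apply ev_snd | apply eval_snd_gen]
  | |- eval PId _ _ => apply ev_id
  | |- eval PZero _ _ => apply ev_zero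
  | |- eval PSucc _ _ => apply ev_succ
  | |- eval (Kc _) _ _ => apply eval_Kc
  | _ => idtac
  end.

Definition Sg : prog := PRec PZero (PComp PSucc PZero).
Definition IsZ : prog := PRec (PComp PSucc PZero) PZero.
Definition Pd : prog := PRec PZero (PComp PFst PSnd).
Definition Guard (g : prog) : prog := PRec PZero (PComp g PFst).
Definition Add : prog := PRec PId (PComp PSucc (PComp PSnd PSnd)).
Definition PredN : prog := PComp Pd (PPair PZero PId).

Lemma eval_Sg : forall x n, eval Sg (pairN x n) (match n with O => 0 | _ => 1 end)%nat.
Proof. intros x n. induction n. apply ev_rec0; ev.
  eapply ev_recS. apply IHn. ev. Qed.
Lemma eval_IsZ : forall x n, eval IsZ (pairN x n) (match n with O => 1 | _ => 0 end)%nat.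
Proof. intros x n. induction n. apply ev_rec0; ev.
  eapply ev_recS. apply IHn. ev. Qed.
Lemma eval_Pd : forall x n, eval Pd (pairN x n) (pred n).
Proof. intros x n. induction n. apply ev_rec0; ev.
  eapply ev_recS. apply IHn. ev. Qed.
Lemma eval_PredN : forall n, eval PredN n (pred n).
Proof. intros n. unfold PredN. ev. apply eval_Pd. Qed.
Lemma eval_Add : forall a b, eval Add (pairN a b) (a + b).
Proof. intros a b. induction b. rewrite Nat.add_0_r. apply ev_rec0; ev.
  rewrite Nat.add_succ_r. eapply ev_recS. apply IHb. ev. Qed.
Lemma Guard_0 : forall g x, eval (Guard g) (pairN x 0) 0.
Proof. intros. apply ev_rec0; ev. Qed.
Lemma Guard_1 : forall g x z, eval g x z -> eval (Guard g) (pairN x 1) z.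
Proof. intros. eapply ev_recS. apply ev_rec0; ev. ev. exact H. Qed.

Definition Case (F G : prog) : prog :=
  PComp PredN (PComp Add (PPair
     (PComp (Guard (PComp PSucc F)) (PPair PFst IsZ))
     (PComp (Guard (PComp PSucc G)) (PPair (PPair PFst Pd) Sg)))).

Lemma Case_0 : forall F G x z, eval F x z -> eval (Case F G) (pairN x 0) z.
Proof.
  intros. unfold Case.
  apply (ev_comp _ _ _ (S z)); [|apply eval_PredN].
  apply (ev_comp _ _ _ (pairN (S z) 0)); [|replace z with (pred (S z + 0)) at 2 by lia; apply eval_Add].
  apply ev_pair.
  - apply (ev_comp _ _ _ (pairN x 1)). apply ev_pair. ev. apply eval_IsZ.
    apply Guard_1. ev. exact H.
  - apply (ev_comp _ _ _ (pairN (pairN x 0) 0)). apply ev_pair. apply ev_pair. ev. apply eval_Pd.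
    apply eval_Sg. apply Guard_0.
Qed.

Lemma Case_S : forall F G x m z, eval G (pairN x m) z -> eval (Case F G) (pairN x (S m)) z.
Proof.
  intros. unfold Case.
  apply (ev_comp _ _ _ (S z)); [|apply eval_PredN].
  apply (ev_comp _ _ _ (pairN 0 (S z))); [|replace z with (pred (0 + S z)) at 2 by lia; apply eval_Add].
  apply ev_pair.
  - apply (ev_comp _ _ _ (pairN x 0)). apply ev_pair. ev. apply eval_IsZ.
    apply Guard_0.
  - apply (ev_comp _ _ _ (pairN (pairN x m) 1)). apply ev_pair. apply ev_pair. ev. apply eval_Pd.
    apply eval_Sg. apply Guard_1. ev. exact H.
Qed.

Fixpoint recF (F G : nat -> option nat) (x n : nat) : option nat :=
  match n with
  | O => F x
  | S m => match recF F G x m with Some y => G (pairN x (pairN m y)) | None => None end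
  end.

Fixpoint muSt (F : nat -> option nat) (x k : nat) : nat :=
  match k with
  | O => 0
  | S m => match muSt F x m with
           | O => match F (pairN x m) with
                  | None => 1 | Some O => S (S m) | Some (S _) => 0 end
           | S st => S st
           end
  end.

Fixpoint fe (p : prog) (t x : nat) : option nat :=
  match p with
  | PZero => Some 0%nat
  | PSucc => Some (S x)
  | PId => Some x
  | PFst => Some (fst (unpair x))
  | PSnd => Some (snd (unpair x))
  | PComp f g => match fe g t x with Some y => fe f t y | None => None end
  | PPair f g => match fe f t x with
                 | Some a => match fe g t x with Some b => Some (pairN a b) | None => None end
                 | None => None end
  | PRec f g => recF (fe f t) (fe g t) (fst (unpair x)) (snd (unpair x))
  | PMu f => match muSt (fe f t) x t with S (S n) => Some n | _ => None end
  end.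

Definition enc (o : option nat) : nat := match o with None => 0 | Some y => S y end.

Definition StepR (cg : prog) : prog :=
  PComp (Case PZero (PComp cg (PPair (PPair (PComp PFst (PComp PFst PFst))
                                             (PPair (PComp PFst (PComp PSnd PFst)) PSnd))
                                      (PComp PSnd (PComp PFst PFst)))))
        (PPair PId (PComp PSnd PSnd)).

Definition StepM (cf : prog) : prog :=
  PComp (Case (PComp (Case (Kc 1) (Case (PComp PSucc PSucc) PZero))
                     (PPair (PComp PFst PSnd)
                            (PComp cf (PPair (PPair (PComp PFst PFst) (PComp PFst PSnd))
                                             (PComp PSnd PFst)))))
              (PComp PSucc PSnd))
        (PPair PId (PComp PSnd PSnd)).

Definition PostM : prog :=
  PComp (Case PZero (Case PZero (PComp PSucc PSnd))) (PPair PZero PId).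

Fixpoint clock (p : prog) : prog :=
  match p with
  | PComp f g => PComp (Case PZero (PComp (clock f) (PPair PSnd PFst))) (PPair PSnd (clock g))
  | PPair f g => PComp (Case PZero (PComp (Case PZero PSucc) (PPair PSnd (PComp PSnd PFst))))
                       (PPair (PPair PSnd (clock g)) (clock f))
  | PRec f g => PComp (PRec (clock f) (StepR (clock g)))
                      (PPair (PPair (PComp PFst PFst) PSnd) (PComp PSnd PFst))
  | PMu f => PComp PostM (PComp (PRec PZero (StepM (clock f))) (PPair PId PSnd))
  | q => PComp PSucc (PComp q PFst)
  end.

Lemma clock_correct : forall p t x, eval (clock p) (pairN x t) (enc (fe p t x)).
Proof.
  induction p; intros t x; simpl; try (ev; fail).
  -
    apply (ev_comp _ _ _ (pairN t (enc (fe p2 t x)))). ev. apply IHp2.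
    destruct (fe p2 t x) as [y|]; simpl.
    + apply Case_S. ev. apply IHp1.
    + apply Case_0. ev.
  -
    apply (ev_comp _ _ _ (pairN (pairN t (enc (fe p2 t x))) (enc (fe p1 t x)))).
    ev. apply IHp2. apply IHp1.
    destruct (fe p1 t x) as [a|]; simpl.
    + apply Case_S. apply (ev_comp _ _ _ (pairN a (enc (fe p2 t x)))). ev.
      destruct (fe p2 t x) as [b|]; simpl.
      * apply Case_S. ev.
      * apply Case_0. ev.
    + apply Case_0. ev.
  -
    apply (ev_comp _ _ _ (pairN (pairN (fst (unpair x)) t) (snd (unpair x)))). ev.
    generalize (snd (unpair x)) as n. generalize (fst (unpair x)) as a. intros a n.
    induction n as [|n IHn]; simpl.
    + apply ev_rec0. apply IHp1.
    + eapply ev_recS. apply IHn.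
      unfold StepR. apply (ev_comp _ _ _ (pairN (pairN (pairN a t) (pairN n (enc (recF (fe p1 t) (fe p2 t) a n))))
                        (enc (recF (fe p1 t) (fe p2 t) a n)))). ev.
      destruct (recF (fe p1 t) (fe p2 t) a n) as [y|]; simpl.
      * apply Case_S. apply (ev_comp _ _ _ (pairN (pairN a (pairN n y)) t)). ev. apply IHp2.
      * apply Case_0. ev.
  -
    apply (ev_comp _ _ _ (muSt (fe p t) x t)).
    + apply (ev_comp _ _ _ (pairN (pairN x t) t)). ev.
      generalize t at 2 4 as k. intros k. induction k as [|k IHk]; simpl.
      * apply ev_rec0. ev.
      * eapply ev_recS. apply IHk. unfold StepM.
        apply (ev_comp _ _ _ (pairN (pairN (pairN x t) (pairN k (muSt (fe p t) x k))) (muSt (fe p t) x k))). ev.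
        destruct (muSt (fe p t) x k) as [|st]; simpl.
        -- apply Case_0. apply (ev_comp _ _ _ (pairN k (enc (fe p t (pairN x k))))).
           ev. apply IHp.
           destruct (fe p t (pairN x k)) as [[|c]|]; simpl.
           ++ apply Case_S. apply Case_0. ev.
           ++ apply Case_S. apply Case_S. ev.
           ++ apply Case_0. ev.
        -- apply Case_S. ev.
    + unfold PostM. apply (ev_comp _ _ _ (pairN 0 (muSt (fe p t) x t))). ev.
      destruct (muSt (fe p t) x t) as [|[|n]]; simpl.
      * apply Case_0. ev.
      * apply Case_S. apply Case_0. ev.
      * apply Case_S. apply Case_S. ev.
Qed.

Definition ext (F F' : nat -> option nat) := forall z v, F z = Some v -> F' z = Some v.

Lemma recF_mono : forall F G F' G', ext F F' -> ext G G' ->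
  forall x n y, recF F G x n = Some y -> recF F' G' x n = Some y.
Proof.
  intros F G F' G' HF HG x n. induction n as [|n IH]; intros y H; simpl in *.
  - auto.
  - destruct (recF F G x n) as [v|] eqn:E; [|discriminate].
    rewrite (IH v eq_refl). auto.
Qed.

Lemma muSt_zero : forall F x k, muSt F x k = 0%nat ->
  forall m, (m < k)%nat -> exists j, F (pairN x m) = Some (S j).
Proof.
  intros F x k. induction k as [|k IH]; intros H m Hm; simpl in *. lia.
  destruct (muSt F x k) as [|st] eqn:E; [|discriminate].
  destruct (F (pairN x k)) as [[|j]|] eqn:E2; try discriminate.
  destruct (Nat.eq_dec m k). subst. eauto. apply IH; auto; lia.
Qed.

Lemma muSt_found : forall F x k n, muSt F x k = S (S n) ->
  (n < k)%nat /\ F (pairN x n) = Some 0%nat /\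
  (forall m, (m < n)%nat -> exists j, F (pairN x m) = Some (S j)).
Proof.
  intros F x k. induction k as [|k IH]; intros n H; simpl in *. discriminate.
  destruct (muSt F x k) as [|st] eqn:E.
  - destruct (F (pairN x k)) as [[|j]|] eqn:E2; try discriminate.
    injection H as <-. split; [lia|]. split; auto.
    apply muSt_zero; auto.
  - destruct (IH n H) as [A [B C]]. split; [lia|]. auto.
Qed.

Lemma muSt_all : forall F x k, (forall m, (m < k)%nat -> exists j, F (pairN x m) = Some (S j)) ->
  muSt F x k = 0%nat.
Proof.
  intros F x k. induction k as [|k IH]; intros H; simpl. reflexivity.
  rewrite IH by (intros; apply H; lia).
  destruct (H k ltac:(lia)) as [j Hj]. rewrite Hj. reflexivity.
Qed.

Lemma muSt_get : forall F x k n, (n < k)%nat -> F (pairN x n) = Some 0%nat ->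
  (forall m, (m < n)%nat -> exists j, F (pairN x m) = Some (S j)) ->
  muSt F x k = S (S n).
Proof.
  intros F x k. induction k as [|k IH]; intros n Hn H0 H1. lia.
  simpl. destruct (Nat.eq_dec n k).
  - subst. rewrite muSt_all by auto. rewrite H0. reflexivity.
  - rewrite (IH n) by (auto; lia). reflexivity.
Qed.

Lemma fe_mono : forall p t t', (t <= t')%nat -> ext (fe p t) (fe p t').
Proof.
  induction p; intros t t' Ht z v H; simpl in *; auto.
  - destruct (fe p2 t z) as [y|] eqn:E; [|discriminate].
    rewrite (IHp2 t t' Ht z y E). apply (IHp1 t t' Ht); auto.
  - destruct (fe p1 t z) as [a|] eqn:E; [|discriminate].
    destruct (fe p2 t z) as [b|] eqn:E2; [|discriminate].
    rewrite (IHp1 t t' Ht z a E), (IHp2 t t' Ht z b E2). auto.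
  - eapply recF_mono; [apply IHp1 | apply IHp2 | exact H]; auto.
  - destruct (muSt (fe p t) z t) as [|[|n]] eqn:E; try discriminate.
    injection H as <-. apply muSt_found in E. destruct E as [A [B C]].
    rewrite (muSt_get (fe p t') z t' n); auto. lia.
    apply (IHp t t' Ht); auto.
    intros m Hm. destruct (C m Hm) as [j Hj]. exists j. apply (IHp t t' Ht); auto.
Qed.

Lemma finite_max : forall (P : nat -> nat -> Prop),
  (forall m t t', (t <= t')%nat -> P m t -> P m t') ->
  forall n, (forall m, (m < n)%nat -> exists t, P m t) ->
  exists T, forall m, (m < n)%nat -> P m T.
Proof.
  intros P Hmono n. induction n as [|n IH]; intros H.
  - exists 0%nat. intros; lia.
  - destruct IH as [T1 HT1]. intros; apply H; lia.
    destruct (H n ltac:(lia)) as [T2 HT2].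
    exists (Nat.max T1 T2). intros m Hm. destruct (Nat.eq_dec m n).
    + subst. eapply Hmono; [|exact HT2]. lia.
    + eapply Hmono; [|apply HT1; lia]. lia.
Qed.

Lemma fe_complete : forall p x y, eval p x y -> exists T, fe p T x = Some y.
Proof.
  fix IH 4. intros p x y H. destruct H.
  - exists 0%nat; reflexivity.
  - exists 0%nat; reflexivity.
  - exists 0%nat; reflexivity.
  - exists 0%nat. simpl. rewrite unpair_pair. reflexivity.
  - exists 0%nat. simpl. rewrite unpair_pair. reflexivity.
  - destruct (IH _ _ _ H) as [T1 H1]. destruct (IH _ _ _ H0) as [T2 H2].
    exists (Nat.max T1 T2). simpl.
    rewrite (fe_mono g T1 (Nat.max T1 T2) ltac:(lia) x y H1).
    apply (fe_mono f T2); auto; lia.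
  - destruct (IH _ _ _ H) as [T1 H1]. destruct (IH _ _ _ H0) as [T2 H2].
    exists (Nat.max T1 T2). simpl.
    rewrite (fe_mono f T1 (Nat.max T1 T2) ltac:(lia) x a H1).
    rewrite (fe_mono g T2 (Nat.max T1 T2) ltac:(lia) x b H2). reflexivity.
  - destruct (IH _ _ _ H) as [T1 H1]. exists T1. simpl. rewrite unpair_pair. exact H1.
  - destruct (IH _ _ _ H) as [T1 H1]. destruct (IH _ _ _ H0) as [T2 H2].
    exists (Nat.max T1 T2). simpl in *. rewrite unpair_pair in *. simpl in *.
    pose proof (recF_mono _ _ _ _ (fe_mono f T1 (Nat.max T1 T2) ltac:(lia))
                 (fe_mono g T1 (Nat.max T1 T2) ltac:(lia)) x n y H1) as E.
    rewrite E. apply (fe_mono g T2); auto; lia.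
  - rename H0 into e. destruct (IH _ _ _ H) as [T1 H1].
    assert (HA : forall m, (m < n)%nat -> exists T, exists k, fe f T (pairN x m) = Some (S k)).
    { intros m Hm. destruct (e m Hm) as [k Hk]. destruct (IH _ _ _ Hk) as [T HT]. eauto. }
    assert (HM : forall m t t', (t <= t')%nat -> (exists k, fe f t (pairN x m) = Some (S k)) ->
                   exists k, fe f t' (pairN x m) = Some (S k)).
    { intros m t t' Ht [k Hk]. exists k. apply (fe_mono f t); auto. }
    destruct (finite_max (fun m T => exists k, fe f T (pairN x m) = Some (S k)) HM n HA) as [T2 H2].
    remember (Nat.max (S n) (Nat.max T1 T2)) as TT. exists TT. simpl.
    rewrite (muSt_get _ _ _ n). reflexivity.
    lia.
    apply (fe_mono f T1); auto; lia.
    intros m Hm. destruct (H2 m Hm) as [k Hk]. exists k. apply (fe_mono f T2); auto; lia.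
Qed.

Section Prob.
Variables (wu wd : nat -> R).
Hypothesis Hpos : forall n, 0 < wu n /\ 0 < wd n.

Lemma pu_pos : forall s, 0 < p_up wu wd s.
Proof. intros [|s]; simpl. lra. destruct (Hpos (S s)). apply Rdiv_lt_0_compat; lra. Qed.
Lemma pd_nonneg : forall s, 0 <= p_down wu wd s.
Proof. intros [|s]; simpl. lra. destruct (Hpos (S s)). apply Rlt_le, Rdiv_lt_0_compat; lra. Qed.
Lemma pu_pd : forall s, p_up wu wd s + p_down wu wd s = 1.
Proof. intros [|s]; simpl. lra. destruct (Hpos (S s)). field. lra. Qed.

Lemma ind_true : forall (X : nat -> Prop) s, X s -> Defs.ind X s = true.
Proof. intros. unfold Defs.ind. destruct (excluded_middle_informative (X s)); auto; contradiction. Qed.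
Lemma ind_false : forall (X : nat -> Prop) s, ~ X s -> Defs.ind X s = false.
Proof. intros. unfold Defs.ind. destruct (excluded_middle_informative (X s)); auto; contradiction. Qed.

Lemma reach_S : forall X n s, reach_n wu wd X (S n) s =
  if Defs.ind X s then 1 else p_up wu wd s * reach_n wu wd X n (S s) + p_down wu wd s * reach_n wu wd X n (pred s).
Proof. reflexivity. Qed.
Lemma reach_0 : forall X s, reach_n wu wd X 0 s = if Defs.ind X s then 1 else 0.
Proof. reflexivity. Qed.

Lemma reach_in : forall (X : nat -> Prop) n s, X s -> reach_n wu wd X n s = 1.
Proof. intros X [|n] s H; [rewrite reach_0|rewrite reach_S]; rewrite ind_true; auto. Qed.

Lemma reach_bounds : forall X n s, 0 <= reach_n wu wd X n s <= 1.
Proof.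
  intros X n. induction n as [|n IH]; intros s.
  - rewrite reach_0. destruct (Defs.ind X s); lra.
  - rewrite reach_S. destruct (Defs.ind X s). lra.
    pose proof (pu_pos s). pose proof (pd_nonneg s). pose proof (pu_pd s).
    destruct (IH (S s)), (IH (pred s)). split; nra.
Qed.

Lemma reach_mono : forall X n s, reach_n wu wd X n s <= reach_n wu wd X (S n) s.
Proof.
  intros X n. induction n as [|n IH]; intros s.
  - rewrite reach_0, reach_S. destruct (Defs.ind X s). lra.
    pose proof (pu_pos s). pose proof (pd_nonneg s).
    destruct (reach_bounds X 0 (S s)), (reach_bounds X 0 (pred s)). nra.
  - rewrite (reach_S X n), (reach_S X (S n)). destruct (Defs.ind X s). lra.
    pose proof (pu_pos s). pose proof (pd_nonneg s).
    pose proof (IH (S s)). pose proof (IH (pred s)). nra.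
Qed.

Lemma reach_mono_le : forall X n m s, (n <= m)%nat -> reach_n wu wd X n s <= reach_n wu wd X m s.
Proof.
  intros X n m s H. induction H. lra. eapply Rle_trans. apply IHle. apply reach_mono.
Qed.

Lemma PrF_upper : forall X s c, (forall n, reach_n wu wd X n s <= c) -> PrF wu wd s X <= c.
Proof.
  intros X s c H. unfold PrF.
  assert (H1 : Rbar_le (Lim_seq (fun n => reach_n wu wd X n s)) (Lim_seq (fun _ => c))).
  { apply Lim_seq_le_loc. exists 0%nat. intros; apply H. }
  assert (H2 : Rbar_le (Lim_seq (fun _ => 0)) (Lim_seq (fun n => reach_n wu wd X n s))).
  { apply Lim_seq_le_loc. exists 0%nat. intros; apply reach_bounds. }
  rewrite Lim_seq_const in H1, H2.
  destruct (Lim_seq (fun n => reach_n wu wd X n s)); simpl in *; try contradiction; lra.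
Qed.

Lemma PrF_lower : forall X s c K, (forall n, (K <= n)%nat -> c <= reach_n wu wd X n s) -> c <= PrF wu wd s X.
Proof.
  intros X s c K H. unfold PrF.
  assert (H1 : Rbar_le (Lim_seq (fun n => reach_n wu wd X n s)) (Lim_seq (fun _ => 1))).
  { apply Lim_seq_le_loc. exists 0%nat. intros; apply reach_bounds. }
  assert (H2 : Rbar_le (Lim_seq (fun _ => c)) (Lim_seq (fun n => reach_n wu wd X n s))).
  { apply Lim_seq_le_loc. exists K. intros; apply H; auto. }
  rewrite Lim_seq_const in H1, H2.
  destruct (Lim_seq (fun n => reach_n wu wd X n s)); simpl in *; try contradiction; lra.
Qed.

Lemma reach_empty : forall (X : nat -> Prop), (forall s, ~ X s) -> forall n s, reach_n wu wd X n s = 0.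
Proof.
  intros X HX n. induction n; intros s. rewrite reach_0, ind_false; auto.
  rewrite reach_S, ind_false, !IHn; auto. lra.
Qed.

Lemma supermart : forall (X : nat -> Prop) (g : nat -> R),
  (forall s, 0 <= g s) -> (forall s, X s -> 1 <= g s) ->
  (forall s, ~ X s -> p_up wu wd s * g (S s) + p_down wu wd s * g (pred s) <= g s) ->
  forall n s, reach_n wu wd X n s <= g s.
Proof.
  intros X g H0 H1 H2 n. induction n as [|n IH]; intros s.
  - rewrite reach_0. destruct (excluded_middle_informative (X s)).
    rewrite ind_true; auto. rewrite ind_false; auto.
  - rewrite reach_S. destruct (excluded_middle_informative (X s)).
    rewrite ind_true; auto. rewrite ind_false; auto.
    pose proof (pu_pos s). pose proof (pd_nonneg s).
    pose proof (IH (S s)). pose proof (IH (pred s)). pose proof (H2 s n0). nra.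
Qed.

Fixpoint Ld (s : nat) : R :=
  match s with O => 1 | S k => p_down wu wd (S k) * Ld k end.

Lemma straight_down : forall s n, (s <= n)%nat ->
  Ld s <= reach_n wu wd (fun t => In t (0%nat :: nil)) n s.
Proof.
  induction s as [|s IH]; intros n Hn.
  - rewrite reach_in. simpl; lra. simpl; auto.
  - destruct n as [|n]. lia. rewrite reach_S, ind_false.
    2:{ simpl. intros [H|H]; [discriminate|contradiction]. }
    change (Ld (S s)) with (p_down wu wd (S s) * Ld s). change (pred (S s)) with s.
    pose proof (pu_pos (S s)). pose proof (pd_nonneg (S s)).
    pose proof (IH n ltac:(lia)).
    destruct (reach_bounds (fun t => In t (0%nat :: nil)) n (S (S s))).
    pose proof (Rmult_le_compat_l _ _ _ H0 H1).
    pose proof (Rmult_le_pos _ _ (Rlt_le _ _ H) H2). lra.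
Qed.

Lemma pow_le1 : forall x n, 0 <= x <= 1 -> x ^ n <= 1.
Proof. intros x n H. induction n; simpl. lra. pose proof (pow_le x n ltac:(lra)). nra. Qed.

Fixpoint cj (N j s : nat) : R :=
  if (N <=? s)%nat then 1 else match j with O => 0 | S j' => p_up wu wd s * cj N j' (S s) end.

Lemma pu_le1 : forall s, p_up wu wd s <= 1.
Proof. intros s. pose proof (pu_pd s). pose proof (pd_nonneg s). lra. Qed.

Lemma cj_bounds : forall N j s, 0 <= cj N j s <= 1.
Proof.
  intros N j. induction j; intros s; simpl; destruct (N <=? s)%nat; try lra.
  pose proof (pu_pos s). pose proof (pu_le1 s). destruct (IHj (S s)). split; nra.
Qed.

Lemma cj_lower : forall N mu, 0 < mu <= 1 -> (forall k, (k < N)%nat -> mu <= p_up wu wd k) ->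
  forall j s, (N <= s + j)%nat -> mu ^ j <= cj N j s.
Proof.
  intros N mu Hmu Hk j. induction j; intros s Hs; simpl.
  - destruct (N <=? s)%nat eqn:E. lra. apply Nat.leb_nle in E. lia.
  - destruct (N <=? s)%nat eqn:E.
    + assert (mu ^ j <= 1) by (apply pow_le1; lra). 
      pose proof (pow_le mu j ltac:(lra)). nra.
    + apply Nat.leb_nle in E. pose proof (Hk s ltac:(lia)).
      pose proof (IHj (S s) ltac:(lia)). pose proof (pow_le mu j ltac:(lra)). nra.
Qed.



Lemma block : forall (Y : nat -> Prop) N, (forall s, (N <= s)%nat -> Y s) ->
  forall M n, (forall s, 1 - reach_n wu wd Y n s <= M) ->
  forall j s, 1 - reach_n wu wd Y (j + n) s <= M * (1 - cj N j s).
Proof.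
  intros Y N HY M n HM.
  assert (HM0 : 0 <= M) by (pose proof (HM 0%nat); destruct (reach_bounds Y n 0); lra).
  induction j as [|j IH]; intros s.
  - simpl. destruct (N <=? s)%nat eqn:E.
    + apply Nat.leb_le in E. rewrite reach_in by auto. lra.
    + rewrite Rminus_0_r, Rmult_1_r. apply HM.
  - simpl (S j + n)%nat. simpl cj. destruct (N <=? s)%nat eqn:E.
    + apply Nat.leb_le in E. rewrite reach_in by auto. lra.
    + destruct (excluded_middle_informative (Y s)) as [Hy|Hy].
      * rewrite reach_in by auto. pose proof (cj_bounds N (S j) s) as Hc. simpl in Hc.
        rewrite E in Hc. pose proof (Rmult_le_pos M (1 - p_up wu wd s * cj N j (S s)) HM0 ltac:(lra)). lra.
      * rewrite reach_S, ind_false by auto.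
        pose proof (pu_pd s) as Hs. pose proof (pu_pos s). pose proof (pd_nonneg s).
        pose proof (IH (S s)) as I1. pose proof (IH (pred s)) as I2.
        destruct (cj_bounds N j (pred s)).
        set (r1 := reach_n wu wd Y (j + n) (S s)) in *.
        set (r2 := reach_n wu wd Y (j + n) (pred s)) in *.
        set (c1 := cj N j (S s)) in *. set (c2 := cj N j (pred s)) in *.
        set (pu := p_up wu wd s) in *. set (pd := p_down wu wd s) in *.
        assert (A1 : pu * (1 - r1) <= pu * (M * (1 - c1))) by (apply Rmult_le_compat_l; lra).
        assert (A2 : pd * (1 - r2) <= pd * (M * (1 - c2))) by (apply Rmult_le_compat_l; lra).
        assert (A3 : pd * (M * (1 - c2)) <= pd * M).
        { apply Rmult_le_compat_l. lra. pose proof (Rmult_le_pos M c2 HM0 ltac:(lra)). nra. }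
        assert (Hpd : pd = 1 - pu) by lra.
        replace (1 - (pu * r1 + pd * r2)) with (pu * (1 - r1) + pd * (1 - r2)) by (rewrite Hpd; ring).
        replace (M * (1 - pu * c1)) with (pu * (M * (1 - c1)) + pd * M) by (rewrite Hpd; ring).
        lra.
Qed.

Lemma mu_exists : forall N, exists mu, 0 < mu <= 1 /\ forall k, (k < N)%nat -> mu <= p_up wu wd k.
Proof.
  induction N as [|N [mu [Hmu Hk]]].
  - exists 1. split. lra. intros; lia.
  - exists (Rmin mu (p_up wu wd N)). pose proof (pu_pos N). pose proof (pu_le1 N). split.
    + unfold Rmin; destruct (Rle_dec mu (p_up wu wd N)); lra.
    + intros k Hk'. destruct (Nat.eq_dec k N). subst. apply Rmin_r.
      eapply Rle_trans. apply Rmin_l. apply Hk. lia.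
Qed.

Lemma hit_upper : forall (Y : nat -> Prop) N s0 theta, theta < 1 ->
  (forall s, (N <= s)%nat -> Y s) -> theta < PrF wu wd s0 Y.
Proof.
  intros Y N s0 theta Ht HY.
  destruct (mu_exists N) as [mu [Hmu Hk]].
  set (q := 1 - mu ^ N).
  assert (Hq0 : 0 < mu ^ N) by (apply pow_lt; lra).
  assert (Hq1 : mu ^ N <= 1) by (apply pow_le1; lra).
  assert (Hiter : forall k s, 1 - reach_n wu wd Y (k * N) s <= q ^ k).
  { induction k as [|k IH]; intros s.
    - change (0 * N)%nat with 0%nat. rewrite pow_O. destruct (reach_bounds Y 0 s). lra.
    - pose proof (block Y N HY (q ^ k) (k * N) IH N s) as B.
      change (S k * N)%nat with (N + k * N)%nat.
      eapply Rle_trans. apply B.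
      pose proof (cj_lower N mu Hmu Hk N s ltac:(lia)).
      assert (0 <= q ^ k) by (apply pow_le; unfold q; lra).
      simpl. rewrite Rmult_comm. apply Rmult_le_compat_r. lra. unfold q. lra. }
  destruct (pow_lt_1_zero q ltac:(unfold q; rewrite Rabs_right; lra) (1 - theta) ltac:(lra)) as [K HK].
  specialize (HK K (le_n K)). rewrite Rabs_right in HK by (apply Rle_ge, pow_le; unfold q; lra).
  apply Rlt_le_trans with (reach_n wu wd Y (K * N) s0).
  - pose proof (Hiter K s0). lra.
  - apply PrF_lower with (K * N)%nat. intros n Hn. apply reach_mono_le. auto.
Qed.

End Prob.

(* ---------- the self-referential walk ---------- *)
Definition K2 : prog := Kc (pairN 2 0).
Definition CK : prog :=
  PComp (PRec PZero (PPair (Kc 5) (PPair (Kc (pairN 1 0)) (PComp PSnd PSnd)))) (PPair PZero PId).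

Lemma eval_CK : forall x, eval CK x (code (Kc x)).
Proof.
  intros x. unfold CK. apply (ev_comp _ _ _ (pairN 0 x)). ev.
  induction x as [|x IH].
  - apply ev_rec0. change (code (Kc 0)) with (pairN 0 0). replace (pairN 0 0) with 0%nat by reflexivity. ev.
  - eapply ev_recS. apply IH. change (code (Kc (S x))) with (pairN 5 (pairN (pairN 1 0) (code (Kc x)))). ev.
Qed.

Definition CWx : prog := PPair (Kc 5) (PPair PId (PPair (Kc 6) (PPair CK (Kc (pairN 2 0))))).
Definition Wd : prog := Kc (pairN 1 0).
Definition Cst : nat := pairN (code Wd) (pairN 0 (code_list (0%nat :: nil))).

Definition Qp (d : prog) : prog :=
  PComp (Case K2 (Case K2 (Case (PPair (Kc 1) (PPair PId PId)) K2)))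
        (PPair PSnd (PComp (clock d) (PPair (PPair (PComp CWx PFst) (Kc Cst)) PSnd))).
Definition Wup (d : prog) : prog := PComp (Qp d) (PPair (Kc (code (Qp d))) PId).

Lemma code_comp : forall f g, code (PComp f g) = pairN 5 (pairN (code f) (code g)).
Proof. reflexivity. Qed.
Lemma code_pair : forall f g, code (PPair f g) = pairN 6 (pairN (code f) (code g)).
Proof. reflexivity. Qed.
Lemma code_PId : code PId = pairN 2 0.
Proof. reflexivity. Qed.

Lemma code_Wup : forall d, code (Wup d) =
  pairN 5 (pairN (code (Qp d)) (pairN 6 (pairN (code (Kc (code (Qp d)))) (pairN 2 0)))).
Proof.
  intros d. unfold Wup. rewrite code_comp, code_pair. rewrite code_PId. reflexivity.
Qed.

Definition Inp (d : prog) : nat := pairN (code (Wup d)) Cst.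

Lemma Inp_eq : forall d, input_code (Wup d) Wd 0 (0%nat :: nil) = Inp d.
Proof. intros d. unfold input_code, Inp, Cst. reflexivity. Qed.

Definition wab (d : prog) (n : nat) : nat * nat :=
  match fe d n (Inp d) with Some 1%nat => (1%nat, pairN n n) | _ => (2%nat, 0%nat) end.
Definition wuf (d : prog) (n : nat) : R := rat_of (fst (wab d n)) (snd (wab d n)).

Lemma eval_CWx : forall d, eval CWx (code (Qp d)) (code (Wup d)).
Proof.
  intros d.
  assert (H1 : eval CWx (code (Qp d))
     (pairN 5 (pairN (code (Qp d)) (pairN 6 (pairN (code (Kc (code (Qp d)))) (pairN 2 0)))))).
  { unfold CWx. ev. apply eval_CK. }
  exact (eq_ind _ (fun v => eval CWx (code (Qp d)) v) H1 _ (eq_sym (code_Wup d))).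
Qed.

Lemma eval_Wup : forall d n, eval (Wup d) n (pairN (fst (wab d n)) (snd (wab d n))).
Proof.
  intros d n. unfold Wup.
  apply (ev_comp _ _ _ (pairN (code (Qp d)) n)).
  { apply ev_pair. apply eval_Kc. apply ev_id. }
  unfold Qp. apply (ev_comp _ _ _ (pairN n (enc (fe d n (Inp d))))).
  - apply ev_pair. apply ev_snd.
    apply (ev_comp _ _ _ (pairN (Inp d) n)); [|apply clock_correct].
    apply ev_pair; [|apply ev_snd]. unfold Inp. apply ev_pair; [|apply eval_Kc].
    apply (ev_comp _ _ _ (code (Qp d))). apply ev_fst. apply eval_CWx.
  - unfold wab. destruct (fe d n (Inp d)) as [[|[|y]]|]; simpl.
    + apply Case_S. apply Case_0. unfold K2. ev.
    + apply Case_S. apply Case_S. apply Case_0. ev.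
    + apply Case_S. apply Case_S. apply Case_S. unfold K2. ev.
    + apply Case_0. unfold K2. ev.
Qed.

Lemma wuf_pos : forall d n, 0 < wuf d n.
Proof.
  intros d n. unfold wuf, rat_of. destruct (wab d n) as [a b] eqn:E. cbn [fst snd].
  assert (a = 1%nat \/ a = 2%nat) as [->| ->].
  { unfold wab in E. destruct (fe d n (Inp d)) as [[|[|]]|]; injection E; intros; subst; auto. }
  all: apply Rdiv_lt_0_compat; apply lt_0_INR; lia.
Qed.

Lemma trans_up : forall wu wd s, trans wu wd s (S s) = p_up wu wd s.
Proof.
  intros wu wd s. unfold trans. destruct (Nat.eq_dec (S s) (S s)); [|congruence].
  destruct s as [|s]. lra. destruct (Nat.eq_dec (S (S s)) s). lia. lra.
Qed.

Lemma reach_all : forall wu wd, (forall n, 0 < wu n /\ 0 < wd n) -> forall s, reachable wu wd 0 s.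
Proof.
  intros wu wd H s. induction s as [|s IH]. apply rt_refl.
  eapply rt_trans. apply IH. apply rt_step. rewrite trans_up. apply pu_pos. auto.
Qed.

Lemma pow2_ge : forall s, INR s + 1 <= 2 ^ s.
Proof. induction s. simpl. lra. rewrite S_INR. simpl pow. pose proof (pos_INR s). lra. Qed.

Lemma key_ineq : forall x P, 0 <= x -> (x + 1) * (x + 3) <= P + 1 ->
  (x + 3) / (2 * (x + 2)) <= 1 / (1 / (P + 1) + 1) * ((x + 2) / (2 * (x + 1))).
Proof.
  intros x P Hx HP.
  assert (HP0 : 0 < P + 1) by nra.
  assert (E : 1 / (1 / (P + 1) + 1) * ((x + 2) / (2 * (x + 1))) - (x + 3) / (2 * (x + 2))
             = ((P + 1) - (x + 1) * (x + 3)) / (2 * (x + 1) * (x + 2) * (P + 2))).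
  { field. repeat split; lra. }
  assert (0 <= ((P + 1) - (x + 1) * (x + 3)) / (2 * (x + 1) * (x + 2) * (P + 2))).
  { apply Rmult_le_pos. lra. apply Rlt_le, Rinv_0_lt_compat.
    assert (0 < 2 * (x + 1) * (x + 2)) by nra. nra. }
  lra.
Qed.

Definition hh (s : nat) : R := (INR s + 2) / (2 * (INR s + 1)).

Lemma hh_dec : forall s, hh (S s) <= hh s.
Proof.
  intros s. unfold hh. rewrite S_INR. pose proof (pos_INR s).
  assert (E : (INR s + 2) / (2 * (INR s + 1)) - (INR s + 1 + 2) / (2 * (INR s + 1 + 1))
              = / (2 * (INR s + 1) * (INR s + 2))) by (field; lra).
  assert (0 < / (2 * (INR s + 1) * (INR s + 2))) by (apply Rinv_0_lt_compat; nra). lra.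
Qed.

Lemma hh_bounds : forall s, 1/2 <= hh s /\ 0 <= hh s.
Proof.
  intros s. unfold hh. pose proof (pos_INR s).
  assert (E : (INR s + 2) / (2 * (INR s + 1)) - 1/2 = / (2 * (INR s + 1))) by (field; lra).
  assert (0 < / (2 * (INR s + 1))) by (apply Rinv_0_lt_compat; nra). lra.
Qed.

Lemma Ld_bound : forall (wu wd : nat -> R) T,
  (forall n, wd n = 1) -> (forall n, 0 < wu n <= 2) ->
  (forall n, (T <= n)%nat -> wu n = rat_of 1 (pairN n n)) ->
  forall s, (1/3) ^ (Nat.min s T) * hh s <= Ld wu wd s.
Proof.
  intros wu wd T Hd Hu HT s. induction s as [|s IH].
  - simpl. unfold hh. simpl. lra.
  - change (Ld wu wd (S s)) with (p_down wu wd (S s) * Ld wu wd s).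
    assert (Hpd : p_down wu wd (S s) = 1 / (wu (S s) + 1)).
    { simpl. rewrite Hd. reflexivity. }
    pose proof (hh_bounds s). pose proof (hh_bounds (S s)). pose proof (hh_dec s).
    destruct (le_lt_dec (S s) T) as [Hle|Hlt].
    + rewrite (Nat.min_l (S s) T Hle) in *. rewrite (Nat.min_l s T) in IH by lia.
      destruct (Hu (S s)).
      assert (1/3 <= p_down wu wd (S s)).
      { rewrite Hpd. apply Rmult_le_reg_r with (wu (S s) + 1). lra.
        replace (1 / (wu (S s) + 1) * (wu (S s) + 1)) with 1 by (field; lra). lra. }
      pose proof (pow_le (1/3) s ltac:(lra)).
      simpl pow. 
      assert (1 / 3 * (1/3) ^ s * hh (S s) <= 1/3 * ((1/3)^s * hh s)).
      { rewrite Rmult_assoc. apply Rmult_le_compat_l. lra. apply Rmult_le_compat_l; lra. }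
      assert (1/3 * ((1/3)^s * hh s) <= p_down wu wd (S s) * Ld wu wd s).
      { apply Rmult_le_compat; try lra. apply Rmult_le_pos; lra. }
      lra.
    + rewrite (Nat.min_r (S s) T) by lia. rewrite (Nat.min_r s T) in IH by lia.
      rewrite Hpd, HT by lia.
      set (P := INR (pairN (S s) (S s))).
      replace (rat_of 1 (pairN (S s) (S s))) with (1 / (P + 1))
        by (unfold rat_of, P; rewrite (S_INR (pairN (S s) (S s))); reflexivity).
      assert (HP : (INR s + 1) * (INR s + 3) <= P + 1).
      { unfold P. assert (Hn : ((s + 1) * (s + 3) <= pairN (S s) (S s) + 1)%nat).
        { pose proof (two_pairN (S s) (S s)). nia. }
        apply le_INR in Hn. rewrite plus_INR, !mult_INR, !plus_INR in Hn. simpl in Hn. lra. }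
      pose proof (key_ineq (INR s) P (pos_INR s) HP) as K.
      assert (Hh : hh (S s) = (INR s + 3) / (2 * (INR s + 2))).
      { unfold hh. rewrite S_INR. f_equal; ring. }
      assert (Hh2 : hh s = (INR s + 2) / (2 * (INR s + 1))) by reflexivity.
      rewrite <- Hh, <- Hh2 in K.
      pose proof (pow_le (1/3) T ltac:(lra)).
      assert (0 <= 1 / (1 / (P + 1) + 1)).
      { assert (0 < P + 1) by (unfold P; pose proof (pos_INR (pairN (S s) (S s))); lra).
        apply Rlt_le. apply Rdiv_lt_0_compat. lra.
        assert (0 < 1 / (P + 1)) by (apply Rdiv_lt_0_compat; lra). lra. }
      set (c := 1 / (1 / (P + 1) + 1)) in *.
      assert (A1 : (1/3) ^ T * hh (S s) <= (1/3) ^ T * (c * hh s)) by (apply Rmult_le_compat_l; lra).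
      assert (A2 : c * ((1/3) ^ T * hh s) <= c * Ld wu wd s) by (apply Rmult_le_compat_l; lra).
      lra.
Qed.

Lemma rat_of_2_0 : rat_of 2 0 = 2.
Proof. unfold rat_of. simpl. field. Qed.
Lemma rat_of_1 : forall s, rat_of 1 s = 1 / (INR s + 1).
Proof. intros s. unfold rat_of. rewrite (S_INR s). reflexivity. Qed.

Theorem theorem1 :
  ~ exists d : prog,
      forall (Wu Wd : prog) (wu wd : nat -> R) (s0 : nat) (A : list nat),
        computes_pos_rat Wu wu -> computes_pos_rat Wd wd ->
        exists b : nat,
          eval d (input_code Wu Wd s0 A) b /\ (b = 1%nat <-> divergent wu wd s0 A).
Proof.
  intros [d Hd].
  set (wu := wuf d). set (wd := fun _ : nat => 1).
  assert (HWu : computes_pos_rat (Wup d) wu).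
  { intros n _. exists (fst (wab d n)), (snd (wab d n)). split. apply eval_Wup.
    split; [|reflexivity]. unfold wab. destruct (fe d n (Inp d)) as [[|[|]]|]; simpl; lia. }
  assert (HWd : computes_pos_rat Wd wd).
  { intros n _. exists 1%nat, 0%nat. split. apply eval_Kc. split. lia.
    unfold wd, rat_of. simpl. field. }
  destruct (Hd (Wup d) Wd wu wd 0%nat (0%nat :: nil) HWu HWd) as [b [Hb Hiff]].
  pose proof (eq_ind _ (fun i => eval d i b) Hb _ (Inp_eq d)) as Hb'. clear Hb. rename Hb' into Hb.
  destruct (fe_complete _ _ _ Hb) as [T HT].
  assert (Hdet : forall t y, fe d t (Inp d) = Some y -> y = b).
  { intros t y H. pose proof (fe_mono d t (Nat.max t T) ltac:(lia) _ _ H) as H1.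
    pose proof (fe_mono d T (Nat.max t T) ltac:(lia) _ _ HT) as H2. congruence. }
  assert (Hpos : forall n, 0 < wu n /\ 0 < wd n).
  { intros n. split. apply wuf_pos. unfold wd; lra. }
  set (X := fun t => In t (0%nat :: nil)).
  destruct (Nat.eq_dec b 1) as [Hb1|Hb1].
  - (* d claims divergence, but the walk eventually drifts down *)
    destruct (proj1 Hiff Hb1) as [f0 [f1 [_ [_ [Hnn [Ha [Hbb Hc]]]]]]].
    assert (Hu : forall n, 0 < wu n <= 2).
    { intros n. split. apply wuf_pos. unfold wu, wuf, wab.
      destruct (fe d n (Inp d)) as [[|[|]]|]; simpl; try (rewrite rat_of_2_0; lra).
      rewrite rat_of_1. pose proof (pos_INR (pairN n n)).
      apply Rmult_le_reg_r with (INR (pairN n n) + 1). lra.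
      unfold Rdiv. rewrite Rmult_1_l, Rinv_l by lra. lra. }
    assert (HT1 : forall n, (T <= n)%nat -> wu n = rat_of 1 (pairN n n)).
    { intros n Hn. unfold wu, wuf, wab.
      rewrite (fe_mono d T n Hn _ _ HT). subst b. reflexivity. }
    set (delta := (1/3) ^ T * (1/2)).
    assert (Hdp : 0 < delta) by (unfold delta; pose proof (pow_lt (1/3) T ltac:(lra)); lra).
    assert (Hd1 : delta < 1).
    { unfold delta. pose proof (pow_le1 (1/3) T ltac:(lra)). lra. }
    assert (Hlow : forall s, delta <= PrF wu wd s X).
    { intros s. apply (PrF_lower wu wd Hpos X s delta s). intros n Hn.
      eapply Rle_trans; [|apply straight_down; auto].
      eapply Rle_trans; [|apply (Ld_bound wu wd T); auto].
      unfold delta. destruct (hh_bounds s).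
      assert ((1/3) ^ T <= (1/3) ^ (Nat.min s T)).
      { replace T with (Nat.min s T + (T - Nat.min s T))%nat at 1 by lia.
        rewrite pow_add. pose proof (pow_le1 (1/3) (T - Nat.min s T) ltac:(lra)).
        pose proof (pow_le (1/3) (Nat.min s T) ltac:(lra)). nra. }
      pose proof (pow_le (1/3) T ltac:(lra)). nra. }
    destruct (Hc delta (conj Hdp Hd1)) as [N HN].
    assert (HY : forall s, (N <= s)%nat -> f0 s <= delta).
    { intros s Hs. destruct (Rle_lt_dec (f0 s) delta) as [h|h]. auto.
      exfalso. assert (s < N)%nat. apply HN. lra.
      eapply Rle_trans. apply Hlow. apply Hbb. apply reach_all; auto. lia. }
    pose proof (Ha delta (conj Hdp Hd1)) as Ha1.
    pose proof (hit_upper wu wd Hpos (fun s => f0 s <= delta) N 0 delta Hd1 HY). lra.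
  - (* d claims non-divergence, but the walk is transient *)
    apply Hb1. apply Hiff.
    assert (Hw2 : forall n, wu n = 2).
    { intros n. unfold wu, wuf, wab. destruct (fe d n (Inp d)) as [[|[|]]|] eqn:E; simpl;
      try apply rat_of_2_0. apply Hdet in E. congruence. }
    exists (fun _ => 1), (fun s => rat_of 1 s).
    split; [|split; [|split; [|split; [|split]]]].
    + exists (Kc (pairN 1 0)). intros s k. exists 1%nat, 0%nat. split. apply eval_Kc.
      replace (rat_of 1 0) with 1 by (unfold rat_of; simpl; field). rewrite Rminus_diag, Rabs_R0.
      apply Rlt_le, Rinv_0_lt_compat, lt_0_INR. lia.
    + exists (PPair (Kc 1) PFst). intros s k. exists 1%nat, s. split. ev.
      rewrite Rminus_diag, Rabs_R0. apply Rlt_le, Rinv_0_lt_compat, lt_0_INR. lia.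
    + intros s. split. lra. rewrite rat_of_1. pose proof (pos_INR s).
      apply Rlt_le, Rdiv_lt_0_compat; lra.
    + intros theta Ht. apply PrF_upper; auto. intros n.
      rewrite reach_empty; auto. lra. intros s. lra.
    + intros s. apply PrF_upper; auto. intros n.
      eapply Rle_trans. apply (supermart wu wd Hpos X (fun s => (1/2) ^ s)).
      * intros; apply pow_le; lra.
      * intros s' [H|H]; [subst; simpl; lra | contradiction].
      * intros [|k] Hk. exfalso; apply Hk; left; reflexivity.
        simpl. rewrite !Hw2. unfold wd. pose proof (pow_le (1/2) k ltac:(lra)). lra.
      * rewrite rat_of_1. pose proof (pow2_ge s). pose proof (pos_INR s).
        unfold Rdiv. rewrite !Rmult_1_l, pow_inv.
        apply Rinv_le_contravar; lra.
    + intros theta [Ht0 Ht1]. destruct (INR_unbounded (/ theta)) as [N HN].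
      exists N. intros s _ Hs _. rewrite rat_of_1 in Hs.
      destruct (lt_dec s N) as [h|h]. auto. exfalso.
      assert (HsN : INR N <= INR s) by (apply le_INR; lia).
      pose proof (pos_INR s).
      assert (theta * (INR s + 1) <= 1).
      { apply Rmult_le_reg_r with (/ (INR s + 1)). apply Rinv_0_lt_compat; lra.
        rewrite Rmult_assoc, Rinv_r by lra. lra. }
      assert (theta * / theta = 1) by (field; lra).
      assert (theta * INR N > theta * / theta) by (apply Rmult_lt_compat_l; lra).
      nra.
Qed.
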